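(* Let $w_0,w_1$ be words of length $N$. If $w_0\to w_1$ is a perfect star anagram with path $p$ and constant step size $S$ (i.e. $p$ is a perfect star path with $s_n=S$ for all $n$), then $w_1\to w_0$ is a perfect star anagram with the reversed path $\bar p$, whose steps are all equal to a constant $\bar S$ satisfying $\bar S S \bmod N = 1$.
   Context: A path of length $N$ is a vector $p=(p_0,\dots,p_{N-1})$ whose entries are the integers $0,\dots,N-1$ in some order; indices are cyclic, $p_N=p_0$. For an integer $x$, $x\bmod N$ is its remainder in $\{0,\dots,N-1\}$. If $w_0=a_0\cdots a_{N-1}$, then $p$ is a path for the anagram $w_0\to w_1$ if $w_1=a_{p_0}\cdots a_{p_{N-1}}$. The path differences are $d_n=p_{n+1}-p_n$, and the steps are $s_n=d_n$ if $|d_n|<N/2$; $s_n=N/2$ if $|d_n|=N/2$; $s_n=d_n-N$ if $d_n>N/2$; $s_n=d_n+N$ if $d_n<-N/2$. A star path is a path with $|s_n|\neq 1$ for all $n$; a perfect star path is a star path all of whose edge lengths $|s_n|$ are equal (equivalently all $s_n$ equal a common constant). The anagram is a perfect star anagram with path $p$ if $p$ is a path for it that is a perfect star path. The reversed path $\bar p$ is the inverse permutation of $p$: $\bar p_{p_n}=n$ and $p_{\bar p_n}=n$ for all $n$; it is a path for $w_1\to w_0$, and its steps $\bar s_n$ are defined from $\bar p$ in the same way. *)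

(* Defs.v *)
From HB Require Import structures.
From mathcomp Require Import all_boot all_order all_algebra all_fingroup.
Set Implicit Arguments. Unset Strict Implicit. Unset Printing Implicit Defensive.
Import Order.TTheory GRing.Theory Num.Theory.
Local Open Scope ring_scope.

Definition path_for (A : Type) (N : nat) (w0 w1 : 'I_N -> A) (p : {perm 'I_N}) :=
  forall n : 'I_N, w1 n = w0 (p n).

(* path difference d_n = p_{n+1} - p_n (indices cyclic: ordS n = (n+1) mod N) *)
Definition pdiff (N : nat) (p : {perm 'I_N}) (n : 'I_N) : int :=
  (nat_of_ord (p (ordS n)))%:Z - (nat_of_ord (p n))%:Z.

Definition step (N : nat) (p : {perm 'I_N}) (n : 'I_N) : int :=
  let d := pdiff p n in
  if (2 * `|d| < N)%N then d
  else if (2 * `|d| == N)%N then (N %/ 2)%:Z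
  else if 0 < d then d - N%:Z
  else d + N%:Z.

Definition star_path (N : nat) (p : {perm 'I_N}) :=
  forall n : 'I_N, `|step p n| != 1.

Definition perfect_star_path (N : nat) (p : {perm 'I_N}) :=
  star_path p /\ forall n m : 'I_N, `|step p n| = `|step p m|.

Definition perfect_star_anagram (A : Type) (N : nat) (w0 w1 : 'I_N -> A)
  (p : {perm 'I_N}) :=
  path_for w0 w1 p /\ perfect_star_path p.

(* Main.v *)
Require Import Defs.
From HB Require Import structures.
From mathcomp Require Import all_boot all_order all_algebra all_fingroup.
From mathcomp Require Import zify ring.
Import Order.TTheory GRing.Theory Num.Theory.
Local Open Scope ring_scope.

Lemma step_cg N (p : {perm 'I_N}) n : (N%:Z %| pdiff p n - step p n)%Z.
Proof.
rewrite /step; set d := pdiff p n.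
have hd : (`|d| < N)%N.
  rewrite /d /pdiff; have := ltn_ord (p (ordS n)); have := ltn_ord (p n); lia.
case: ifP => [_|h1]; first by rewrite subrr dvdz0.
case: ifP => [h2|h2].
  apply/dvdzP.
  have h3 : (N %/ 2 = `|d|)%N by rewrite -(eqP h2) mulKn.
  rewrite h3.
  case: (ltrP 0 d) => hd0.
    exists 0; lia.
  exists (-1); lia.
case: ifP => h4; apply/dvdzP.
  exists 1; lia.
exists (-1); lia.
Qed.

Lemma step_rng N (p : {perm 'I_N}) n : (- N%:Z < 2 * step p n) && (2 * step p n <= N%:Z).
Proof.
rewrite /step; set d := pdiff p n.
have hd : (`|d| < N)%N.
  rewrite /d /pdiff; have := ltn_ord (p (ordS n)); have := ltn_ord (p n); lia.
case: ifP => h1; first lia.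
case: ifP => h2.
  have h3 : (N %/ 2 = `|d|)%N by rewrite -(eqP h2) mulKn.
  rewrite h3; lia.
case: ifP => h4; lia.
Qed.

Lemma uniq_rep (N : nat) (a b : int) : (N%:Z %| a - b)%Z ->
  (- N%:Z < 2 * a) && (2 * a <= N%:Z) -> (- N%:Z < 2 * b) && (2 * b <= N%:Z) -> a = b.
Proof.
move=> /dvdzP [k hk] ha hb.
have : (k = 0). nia.
move=> k0; move: hk; rewrite k0 mul0r => /eqP; rewrite subr_eq0 => /eqP //.
Qed.

Lemma orbit N' (p : {perm 'I_N'.+1}) (S : int) :
  (forall n, step p n = S) ->
  forall n : 'I_N'.+1, (N'.+1%:Z %| (p n)%:Z - (p ord0)%:Z - (n%:Z) * S)%Z.
Proof.
move=> hS [k hk]; elim: k hk => [|k IH] hk.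
  have -> : Ordinal hk = ord0 by apply: val_inj.
  by rewrite mul0r !subrr dvdz0.
have hk' : (k < N'.+1)%N by lia.
have := IH hk'; have := step_cg _ p (Ordinal hk'); rewrite hS /pdiff.
have -> : ordS (Ordinal hk') = Ordinal hk by apply: val_inj => /=; rewrite modn_small.
move=> /dvdzP [u hu] /dvdzP [v hv]; apply/dvdzP; exists (u + v).
rewrite mulrDl -hu -hv /=. lia.
Qed.

Lemma orbit2 N' (p : {perm 'I_N'.+1}) (S : int) :
  (forall n, step p n = S) ->
  forall i j : 'I_N'.+1, (N'.+1%:Z %| (p j)%:Z - (p i)%:Z - (j%:Z - i%:Z) * S)%Z.
Proof.
move=> hS i j; have /dvdzP [u hu] := orbit _ _ _ hS i; have /dvdzP [v hv] := orbit _ _ _ hS j.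
apply/dvdzP; exists (v - u); lia.
Qed.

Theorem mainTheorem10 (A : Type) (N : nat) (w0 w1 : 'I_N -> A)
  (p : {perm 'I_N}) (S : int) :
  (1 < N)%N ->
  perfect_star_anagram w0 w1 p ->
  (forall n : 'I_N, step p n = S) ->
  perfect_star_anagram w1 w0 p^-1 /\
  exists Sbar : int,
    (forall n : 'I_N, step p^-1 n = Sbar) /\ ((Sbar * S) %% N%:Z)%Z = 1.
Proof.
case: N w0 w1 p => [|N'] w0 w1 p hN //.
move=> [hpath [hstar _]] hS.
set q := (p^-1)%g.
have key : forall m : 'I_N'.+1, (N'.+1%:Z %| pdiff q m * S - 1)%Z.
  move=> m; have := orbit2 _ _ _ hS (q m) (q (ordS m)).
  rewrite /pdiff /q !permKV => /dvdzP [u hu].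
  apply/dvdzP.
  have hm := ltn_ord m.
  have [e he] : exists e : int, (ordS m)%:Z - m%:Z - 1 = e * N'.+1%:Z.
    rewrite /=; case: (ltngtP m.+1 N'.+1) => h.
    - exists 0; rewrite modn_small //; lia.
    - lia.
    - exists (-1); rewrite h modnn; lia.
  exists (e - u); lia.
set T := pdiff q ord0.
have congT : forall m, (N'.+1%:Z %| step q m - T)%Z.
  move=> m; have /dvdzP [u hu] := key m; have /dvdzP [v hv] := key ord0.
  have /dvdzP [w hw] := step_cg _ q m.
  apply/dvdzP; exists (T * u - pdiff q m * v - w).
  rewrite /T; move: (pdiff q m) (pdiff q ord0) (step q m) hu hv hw => a t s hu hv hw.
  rewrite !mulrBl -!mulrA -hu -hv -hw; ring.
set Sbar := step q ord0.
have hconst : forall m, step q m = Sbar.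
  move=> m; apply: (uniq_rep _ _ _ _ (step_rng _ q m) (step_rng _ q ord0)).
  have /dvdzP [u hu] := congT m; have /dvdzP [v hv] := congT ord0.
  apply/dvdzP; exists (u - v); rewrite mulrBl -hu -hv /Sbar; ring.
have hSS : (N'.+1%:Z %| Sbar * S - 1)%Z.
  have /dvdzP [u hu] := key ord0; have /dvdzP [v hv] := congT ord0.
  apply/dvdzP; exists (u + v * S).
  have hv2 := congr1 (fun x => x * S) hv; rewrite /= in hv2; rewrite /Sbar; rewrite /T in hu hv2; lia.
have rS := step_rng _ p ord0; rewrite hS in rS.
have sS := hstar ord0; rewrite hS in sS.
have rSb := step_rng _ q ord0; rewrite -/Sbar in rSb.
have /dvdzP [j hj] := hSS.
split; last first.
  exists Sbar; split => //.
  have -> : Sbar * S = 1 + j * N'.+1%:Z by rewrite -hj; ring.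
  rewrite addrC modzMDl modz_small //; lia.
split.
  by move=> n; rewrite hpath /q permKV.
split; last by move=> n m; rewrite !hconst.
move=> n; rewrite hconst.
apply/negP => /eqP h1.
have : (Sbar = 1) \/ (Sbar = -1) by lia.
case=> hs; rewrite hs in hj.
  have : j = 0 \/ (j >= 1) \/ (j <= -1) by lia.
  case=> [?|[?|?]]; nia.
have : j = 0 \/ (j >= 1) \/ (j <= -1) by lia.
case=> [?|[?|?]]; nia.
Qed.
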